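(* Assume the setting and standing assumptions described in the context, and let $d>0$ with $\Xi\subset\Omega_d=\{z\in\mathbb{R}^{2n}:|z|<d\}$. Let $p\ge1$, $\epsilon>0$, and let $\delta_0,\dots,\delta_p\in\mathbb{R}$ satisfy: $\mathcal{L}_F^p\phi(z)\le\sum_{i=0}^{p-1}\delta_i\mathcal{L}_F^i\phi(z)+\delta_p$ for all $z\in\Omega_d$; $\delta_0\phi((x,0))+\delta_p\ge\epsilon$ for all $x\in\mathrm{Z}$; and $\delta_i\ge0$ for all $i$. Let $A$ be the $(p+1)\times(p+1)$ matrix with $A_{k,k+1}=1$ for $k=1,\dots,p-1$, $p$-th row $(\delta_0,\dots,\delta_{p-1},1)$, last row zero and other entries zero; $C=(1,0,\dots,0)$. Define $$\eta(x,0)=\big(\phi((x,0)),\max(\mathcal{L}_F\phi((x,0)),0),\dots,\max(\mathcal{L}_F^{p-1}\phi((x,0)),0),\delta_p\big)^\top,\qquad \eta_1(x,t)=Ce^{At}\eta(x,0).$$ Then for every $x\in\mathrm{Z}$, the map $t\mapsto\eta_1(x,t)$ is strictly increasing for $t>0$.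
   Context: Let $f:\mathbb{R}^n\times\mathbb{R}^m\to\mathbb{R}^n$ and a feedback law $\upsilon:\mathbb{R}^n\to\mathbb{R}^m$ be given. Define $F:\mathbb{R}^{2n}\to\mathbb{R}^{2n}$ by $F(z,e)=\big(f(z,\upsilon(z+e)),\,-f(z,\upsilon(z+e))\big)$. For $x\in\mathbb{R}^n$, $\xi(t;x)$ denotes the solution of $\dot\xi=F(\xi)$ with $\xi(0;x)=(x,0)$. A triggering function $\phi:\mathbb{R}^{2n}\to\mathbb{R}$ is given. $\mathcal{L}_F^k\phi$ denotes the $k$-th Lie derivative of $\phi$ along $F$ ($\mathcal{L}_F^0\phi=\phi$). Standing assumptions: (i) $F$ is smooth and homogeneous of degree $\alpha\ge1$ with all weights $1$, i.e. $F(\lambda\xi)=\lambda^{\alpha+1}F(\xi)$ for all $\lambda>0$; (ii) $\phi$ is smooth and homogeneous of degree $\theta\ge1$ with weights $1$, i.e. $\phi(\lambda\xi)=\lambda^{\theta+1}\phi(\xi)$ for all $\lambda>0$; (iii) for every $x\ne0$, $\phi((x,0))<0$ and there exists $t_x\in(0,\infty)$ with $\phi(\xi(t_x;x))=0$; (iv) compact sets $\mathrm{Z}\subset\mathbb{R}^n$, $\Xi\subset\mathbb{R}^{2n}$ containing a neighbourhood of the origin are given such that for all $x\in\mathrm{Z}$, $t\ge0$: $\phi(\xi(t;x))\le0\Rightarrow\xi(t;x)\in\Xi$; (v) the origin is the only equilibrium of $\dot\zeta=f(\zeta,\upsilon(\zeta))$. *)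

(* Defs.v *)
From HB Require Import structures.
From mathcomp Require Import all_boot all_order all_algebra.
From mathcomp Require Import all_classical all_reals all_analysis.
Set Implicit Arguments. Unset Strict Implicit. Unset Printing Implicit Defensive.
Import Order.TTheory GRing.Theory Num.Theory.
Import numFieldNormedType.Exports.
Local Open Scope classical_set_scope.
Local Open Scope ring_scope.

Section Defs.
Variable R : realType.

(* Euclidean norm |z| of a row vector (the library norm on matrices is the sup norm). *)
Definition enorm (k : nat) (z : 'rV[R]_k) : R := Num.sqrt (\sum_(i < k) z 0 i ^+ 2).

Fixpoint iterD (V W : normedModType R) (vs : seq V) (g : V -> W) : V -> W :=
  match vs with
  | [::] => g
  | v :: vs' => fun z => 'D_v (iterD vs' g) z
  end.

Definition smooth (V W : normedModType R) (g : V -> W) : Prop :=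
  forall (vs : seq V) (z : V), differentiable (iterD vs g) z.

Definition lie (V : normedModType R) (F : V -> V) (phi : V -> R) : V -> R :=
  fun z => 'D_(F z) phi z.
Definition lieN (V : normedModType R) (k : nat) (F : V -> V) (phi : V -> R) : V -> R :=
  iter k (lie F) phi.

(* homogeneity with all weights 1: g(l x) = l^(deg+1) g(x) for l > 0 *)
Definition homogeneous (V W : normedModType R) (deg : R) (g : V -> W) : Prop :=
  forall (l : R) (x : V), 0 < l -> g (l *: x) = (l `^ (deg + 1)) *: g x.

(* the closed-loop error system F(z,e) = (f(z, u(z+e)), - f(z, u(z+e))) on R^(2n) = R^(n+n) *)
Definition Fsys (n m : nat) (f : 'rV[R]_n -> 'rV[R]_m -> 'rV[R]_n)
  (ups : 'rV[R]_n -> 'rV[R]_m) (xi : 'rV[R]_(n + n)) : 'rV[R]_(n + n) :=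
  let v := f (lsubmx xi) (ups (lsubmx xi + rsubmx xi)) in row_mx v (- v).

Definition expmx (k : nat) (M : 'M[R]_k) : 'M[R]_k :=
  lim ((fun N : nat => \sum_(0 <= j < N) ((j`!)%:R^-1 *: M ^+ j)) @ \oo).

(* the (p+1)x(p+1) matrix A (0-based indices): A i (i+1) = 1 for i < p-1,
   row p-1 = (delta_0, ..., delta_{p-1}, 1), last row zero *)
Definition Amx (p : nat) (delta : nat -> R) : 'M[R]_(p.+1) :=
  \matrix_(i < p.+1, j < p.+1)
    if (i.+1 < p)%N then (if j == i.+1 :> nat then 1 else 0)
    else if i == p.-1 :> nat then (if (j < p)%N then delta j else 1)
    else 0.

Definition Cmx (p : nat) : 'rV[R]_(p.+1) := \row_(j < p.+1) (if j == 0 :> nat then 1 else 0).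

Definition eta0 (p : nat) (n : nat) (F : 'rV[R]_(n + n) -> 'rV[R]_(n + n))
  (phi : 'rV[R]_(n + n) -> R) (delta : nat -> R) (x : 'rV[R]_n) : 'cV[R]_(p.+1) :=
  \col_(i < p.+1)
    if i == 0 :> nat then phi (row_mx x 0)
    else if (i < p)%N then Num.max (lieN i F phi (row_mx x 0)) 0
    else delta p.

Definition eta1 (p n : nat) (F : 'rV[R]_(n + n) -> 'rV[R]_(n + n))
  (phi : 'rV[R]_(n + n) -> R) (delta : nat -> R) (x : 'rV[R]_n) (t : R) : R :=
  (Cmx p *m expmx (t *: Amx p delta) *m eta0 p F phi delta x) 0 0.

End Defs.

(* Main.v *)
Require Import Defs.
From HB Require Import structures.
From mathcomp Require Import all_boot all_order all_algebra.
From mathcomp Require Import all_classical all_reals all_analysis.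
Import Order.TTheory GRing.Theory Num.Theory.
Import numFieldNormedType.Exports.
Local Open Scope classical_set_scope.
Local Open Scope ring_scope.

From mathcomp Require Import ring.
Lemma mx_cvg_entries (R : realType) m n (S : nat -> 'M[R]_(m,n)) :
  (forall a b, cvgn (fun N => S N a b)) ->
  S @ \oo --> \matrix_(a,b) limn (fun N => S N a b).
Proof.
move=> H; apply/cvg_mx_entourageP => A entA.
apply: filter_forall => a; apply: filter_forall => b.
have := H a b => /cvg_app_entourageP /(_ A entA).
by apply: filterS => N HN; rewrite /= mxE; apply/mem_set.
Qed.
Search (continuous (fun _ => _.1 + _.2)).

Section S.
Variables (R : realType) (p : nat) (delta : nat -> R).
Hypothesis Hdpos : forall i, (i <= p)%N -> 0 <= delta i.
Local Notation A := (Amx p delta).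

Lemma nnegM {k l q} {M : 'M[R]_(k,l)} {N : 'M[R]_(l,q)} :
  (forall i j, 0 <= M i j) -> (forall i j, 0 <= N i j) ->
  forall i j, 0 <= (M *m N) i j.
Proof. by move=> HM HN i j; rewrite mxE sumr_ge0 // => k' _; rewrite mulr_ge0. Qed.

Lemma A_nneg i j : 0 <= A i j.
Proof.
rewrite mxE; case: ifP => _; first by case: ifP.
case: ifP => _ //; case: ifP => // jp; exact/Hdpos/ltnW.
Qed.

Lemma id_nneg k i j : 0 <= (1 : 'M[R]_k.+1) i j.
Proof. by rewrite !mxE; case: (i == j). Qed.

Lemma Apow_nneg j a b : 0 <= (A ^+ j) a b.
Proof.
elim: j a b => [|j IH] a b; first by rewrite expr0 id_nneg.
by rewrite exprS -mulmxE; apply: nnegM => //; exact: A_nneg.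
Qed.

Definition mA := \sum_i \sum_j A i j.

Lemma mA_nneg : 0 <= mA.
Proof. by apply: sumr_ge0 => i _; apply: sumr_ge0 => j _; exact: A_nneg. Qed.

Lemma Apow_le j a b : (A ^+ j) a b <= mA ^+ j.
Proof.
elim: j a b => [|j IH] a b.
  by rewrite expr0 !mxE; case: (a == b).
rewrite exprSr -mulmxE mxE exprSr.
apply: (@le_trans _ _ (\sum_k mA ^+ j * A k b)).
  apply: ler_sum => k _; apply: ler_wpM2r; [exact: A_nneg| exact: IH].
rewrite -mulr_sumr; apply: ler_wpM2l; first exact: exprn_ge0 mA_nneg.
apply: ler_sum => k _.
rewrite (bigD1 b) //= lerDl; apply: sumr_ge0 => i _; exact: A_nneg.
Qed.

Definition Sser (t : R) N : 'M[R]_(p.+1) :=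
  \sum_(0 <= j < N) ((j`!)%:R^-1 *: (t *: A) ^+ j).

Lemma Sser_entry t N a b : Sser t N a b =
  \sum_(0 <= j < N) ((j`!)%:R^-1 * (t ^+ j * (A ^+ j) a b)).
Proof. by rewrite summxE; apply: eq_bigr => j _; rewrite exprZn !mxE. Qed.

Lemma Sser_cvg t : 0 <= t -> forall a b, cvgn (fun N => Sser t N a b).
Proof.
move=> t0 a b.
have -> : (fun N => Sser t N a b) =
  (fun N => \sum_(0 <= j < N) ((j`!)%:R^-1 * (t ^+ j * (A ^+ j) a b))).
  by apply/funext => N; rewrite Sser_entry.
apply: nondecreasing_is_cvgn.
  apply: nondecreasing_series => j _ _.
  by rewrite mulr_ge0 ?invr_ge0 ?mulr_ge0 ?exprn_ge0 ?Apow_nneg.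
have e0 : 0 <= t * mA by rewrite mulr_ge0 // mA_nneg.
exists (limn (series (exp_coeff (t * mA)))) => _ [N _ <-].
apply: le_trans (nondecreasing_cvgn_le _ _ N); last first.
- exact: is_cvg_series_exp_coeff.
- by apply: nondecreasing_series => j _ _; exact: exp_coeff_ge0.
rewrite /series /=; apply: ler_sum => j _; rewrite /exp_coeff /=.
rewrite mulrC exprMn; apply: ler_wpM2r; first by rewrite invr_ge0.
by apply: ler_wpM2l; [exact: exprn_ge0 | exact: Apow_le].
Qed.

Lemma expmx_eq t : 0 <= t ->
  expmx (t *: A) = \matrix_(a, b) limn (fun N => Sser t N a b).
Proof.
move=> t0; rewrite /expmx; apply: cvg_lim; first exact: norm_hausdorff.
exact: mx_cvg_entries (Sser_cvg _ t0).
Qed.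

Lemma u_cvg t (t0 : 0 <= t) (c : 'rV[R]_(p.+1)) (v : 'cV[R]_(p.+1)) :
  (fun N => (c *m Sser t N *m v) 0 0) @ \oo --> (c *m expmx (t *: A) *m v) 0 0.
Proof.
rewrite expmx_eq //; set L := \matrix_(a, b) _.
have HL : forall a b, (fun N => Sser t N a b) @ \oo --> L a b.
  by move=> a b; rewrite mxE; exact: Sser_cvg.
rewrite mxE; under eq_cvg do rewrite mxE.
apply: cvg_big => //; first exact: add_continuous.
move=> b _; apply: cvgMr_tmp.
rewrite mxE; under eq_cvg do rewrite mxE.
apply: cvg_big => //; first exact: add_continuous.
by move=> a _; apply: cvgMl_tmp; exact: HL.
Qed.

Lemma u_eq t N (c : 'rV[R]_(p.+1)) (v : 'cV[R]_(p.+1)) :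
  (c *m Sser t N *m v) 0 0 =
  \sum_(0 <= j < N) ((j`!)%:R^-1 * t ^+ j * (c *m A ^+ j *m v) 0 0).
Proof.
rewrite /Sser mulmx_sumr mulmx_suml summxE; apply: eq_bigr => j _.
by rewrite exprZn scalerA -scalemxAr -scalemxAl mxE.
Qed.

Lemma Cmx_mul (w : 'cV[R]_(p.+1)) : (Cmx R p *m w) 0 0 = w 0 0.
Proof.
rewrite mxE (bigD1 ord0) //= big1 => [|i /negbTE Hi]; first by rewrite !mxE /= mul1r addr0.
by rewrite !mxE; case: ifP => [/eqP Hi0|]; [move: Hi; rewrite -(inj_eq val_inj) /= Hi0 | rewrite mul0r].
Qed.

Hypothesis Hp : (1 <= p)%N.

Lemma shiftA (u : 'cV[R]_(p.+1)) (Hu : forall i j, 0 <= u i j) k :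
  (k < p)%N -> u (inord k) 0 <= (A ^+ k *m u) 0 0.
Proof.
elim: k u Hu => [|k IH] u Hu kp.
  rewrite expr0 mul1mx; have -> : (inord 0 : 'I_p.+1) = 0 by apply/val_inj; rewrite /= inordK.
  done.
rewrite exprSr -mulmxE -mulmxA.
apply: (le_trans _ (IH _ (nnegM A_nneg Hu) (ltnW kp))).
rewrite mxE (bigD1 (inord k.+1)) //= ler_wpDr //.
  by apply: sumr_ge0 => i _; rewrite mulr_ge0 // A_nneg.
rewrite [A _ _]mxE !inordK // ?kp ?eqxx ?mul1r //.
  by apply: (leq_trans kp).
by apply: ltnW; apply: (leq_trans kp).
Qed.

Variables (eps : R) (v : 'cV[R]_(p.+1)).
Hypothesis Heps : 0 < eps.
Hypothesis Hv1 : forall i : 'I_p.+1, (i != 0 :> nat) -> 0 <= v i 0.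
Hypothesis Hv0 : eps <= delta 0 * v 0 0 + v ord_max 0.

Lemma Av_pos : eps <= (A *m v) (inord p.-1) 0.
Proof.
have Hpi : (p.-1 < p.+1)%N by rewrite prednK // ltnW.
rewrite mxE (bigD1 ord0) //= (bigD1 ord_max) //=; last first.
  by rewrite -(inj_eq val_inj) /= -lt0n.
have E0 : A (inord p.-1) ord0 = delta 0.
  by rewrite mxE inordK // prednK // ltnn eqxx /= Hp.
have Em : A (inord p.-1) ord_max = 1.
  by rewrite mxE inordK // prednK // ltnn eqxx.
apply: (le_trans Hv0); rewrite E0 Em mul1r addrA lerDl sumr_ge0 // => i /andP [Hi _].
rewrite mulr_ge0 ?A_nneg ?Hv1 //.
Qed.

Lemma Av_nneg i j : 0 <= (A *m v) i j.
Proof.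
rewrite (ord1 j); case: (eqVneq (val i) p.-1) => Hi.
  have -> : i = inord p.-1 by apply/val_inj; rewrite /= inordK ?Hi // (leq_ltn_trans (leq_pred p)) .
  exact: le_trans (ltW Heps) Av_pos.
rewrite mxE (bigD1 ord0) //= addr_ge0 //.
  rewrite mxE; case: ifP => _; first by rewrite /= mul0r.
  case: ifP => [/eqP H|_]; last by rewrite mul0r.
  by move: Hi; rewrite /= H eqxx.
apply: sumr_ge0 => k Hk; rewrite mulr_ge0 ?A_nneg ?Hv1 //.
Qed.

Lemma g_nneg j : (0 < j)%N -> 0 <= (Cmx R p *m A ^+ j *m v) 0 0.
Proof.
case: j => // j _; rewrite -mulmxA Cmx_mul exprSr -mulmxE -mulmxA.
by apply: nnegM => //; [exact: Apow_nneg | exact: Av_nneg].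
Qed.

Lemma g_pos : eps <= (Cmx R p *m A ^+ p *m v) 0 0.
Proof.
rewrite -mulmxA Cmx_mul.
have -> : A ^+ p = A ^+ p.-1 * A by rewrite -exprSr prednK.
rewrite -mulmxE -mulmxA.
apply: (le_trans Av_pos); apply: shiftA; first exact: Av_nneg.
by rewrite ltn_predL.
Qed.
End S.

Theorem proposition5 (R : realType) (n m : nat)
  (f : 'rV[R]_n -> 'rV[R]_m -> 'rV[R]_n) (ups : 'rV[R]_n -> 'rV[R]_m)
  (phi : 'rV[R]_(n + n) -> R) (xi : 'rV[R]_n -> R -> 'rV[R]_(n + n))
  (alpha theta : R) (Z : set 'rV[R]_n) (Xi : set 'rV[R]_(n + n))
  (* xi(.;x) is the (forward) solution of d/dt xi = F(xi), xi(0;x) = (x,0) *)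
  (Hxi0 : forall x, xi x 0 = row_mx x 0)
  (Hxicont : forall x, {within `[0, +oo[, continuous (xi x)})
  (Hxider : forall (x : 'rV[R]_n) (t : R), 0 < t -> is_derive t 1 (xi x) (Fsys f ups (xi x t)))
  (* (i) *)
  (HFsmooth : smooth (Fsys f ups)) (Halpha : 1 <= alpha)
  (HFhom : homogeneous alpha (Fsys f ups))
  (* (ii) *)
  (Hphismooth : smooth phi) (Htheta : 1 <= theta)
  (Hphihom : homogeneous theta phi)
  (* (iii) *)
  (Hphineg : forall x : 'rV[R]_n, x != 0 -> phi (row_mx x 0) < 0)
  (Htx : forall x : 'rV[R]_n, x != 0 -> exists tx : R, 0 < tx /\ phi (xi x tx) = 0)
  (* (iv) *)
  (HZ : compact Z) (HZ0 : nbhs (0 : 'rV[R]_n) Z)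
  (HXi : compact Xi) (HXi0 : nbhs (0 : 'rV[R]_(n + n)) Xi)
  (HZXi : forall (x : 'rV[R]_n) (t : R), Z x -> 0 <= t -> phi (xi x t) <= 0 -> Xi (xi x t))
  (* (v) *)
  (Heq : forall zeta : 'rV[R]_n, f zeta (ups zeta) = 0 <-> zeta = 0)
  (* proposition hypotheses *)
  (d : R) (Hd : 0 < d) (HXid : forall z : 'rV[R]_(n + n), Xi z -> enorm z < d)
  (p : nat) (Hp : (1 <= p)%N) (eps : R) (Heps : 0 < eps) (delta : nat -> R)
  (Hlie : forall z : 'rV[R]_(n + n), enorm z < d ->
     lieN p (Fsys f ups) phi z
       <= \sum_(i < p) delta i * lieN i (Fsys f ups) phi z + delta p)
  (Hdeps : forall x : 'rV[R]_n, Z x -> eps <= delta 0%N * phi (row_mx x 0) + delta p)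
  (Hdpos : forall i, (i <= p)%N -> 0 <= delta i) :
  forall x : 'rV[R]_n, Z x -> forall s t : R, 0 < s -> s < t ->
    eta1 p (Fsys f ups) phi delta x s < eta1 p (Fsys f ups) phi delta x t.

Proof.
move=> x Zx s t s0 st.
set v := eta0 p (Fsys f ups) phi delta x.
have Hv1 : forall i : 'I_p.+1, (i != 0 :> nat) -> 0 <= v i 0.
  move=> i Hi; rewrite mxE (negbTE Hi); case: ifP => _.
    by rewrite le_max lexx orbT.
  exact: Hdpos.
have Hv0 : eps <= delta 0%N * v 0 0 + v ord_max 0.
  rewrite !mxE /= ltnn (gtn_eqF Hp); exact: Hdeps.
pose g j := (Cmx R p *m Amx p delta ^+ j *m v) 0 0.
have gn : forall j, (0 < j)%N -> 0 <= g j.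
  by move=> j; apply: (@g_nneg _ _ _ Hdpos Hp _ _ Heps Hv1 Hv0).
have gp : eps <= g p by apply: (@g_pos _ _ _ Hdpos Hp _ _ Heps Hv1 Hv0).
have cs := @u_cvg _ _ _ Hdpos _ (ltW s0) (Cmx R p) v.
have ct := @u_cvg _ _ _ Hdpos _ (ltW (lt_trans s0 st)) (Cmx R p) v.
pose del := ((p`!)%:R^-1 * (t ^+ p - s ^+ p)) * g p.
have t0 : 0 < t by exact: lt_trans s0 st.
have del0 : 0 < del.
  rewrite /del mulr_gt0 ?(lt_le_trans Heps gp) // mulr_gt0 //.
  by rewrite subr_gt0 ltrXn2r ?(ltW s0) // -lt0n.
have H : eta1 p (Fsys f ups) phi delta x s + del <= eta1 p (Fsys f ups) phi delta x t.
  apply: (ler_cvg_to (cvgD cs (cvg_cst del)) ct).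
  near=> N.
  have pN : (p < N)%N by near: N; exact: nbhs_infty_gt.
  change ((Cmx R p *m Sser R p delta s N *m v) 0 0 + del <= (Cmx R p *m Sser R p delta t N *m v) 0 0).
  rewrite (u_eq _ _ _ s) (u_eq _ _ _ t) addrC -lerBrDr -sumrB big_mkord (bigD1 (Ordinal pN)) //=.
  apply: ler_wpDr.
    apply: sumr_ge0 => j _; rewrite -mulrBl -mulrBr.
    case: (posnP j) => [->|jp]; first by rewrite !expr0 subrr mulr0 mul0r.
    rewrite mulr_ge0 //; last exact: gn.
    rewrite mulr_ge0 ?invr_ge0 // subr_ge0 ltW // ltrXn2r ?(ltW s0) //.
    by rewrite -lt0n.
  rewrite le_eqVlt; apply/orP; left; apply/eqP; rewrite /del /g; ring.
apply: (lt_le_trans _ H); by rewrite ltrDl.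
Unshelve. all: by end_near.
Qed.
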